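(* Let $n,m\ge 1$ and let $\mathbf{K}_1,\dots,\mathbf{K}_m\in\mathbb{R}^{n,n}$. For any ordering of these matrices, i.e. any permutation $\pi$ of $\{1,\dots,m\}$, form the product $\mathbf{K}^{\pi}=\mathbf{K}_{\pi(m)}\mathbf{K}_{\pi(m-1)}\cdots\mathbf{K}_{\pi(1)}$, and for a fixed index $i$ define the block sensitivity of $\mathbf{K}_i$ in this product as $\mathrm{BS}_i^{\pi}=\left|\,\left|\frac{\partial\mathbf{K}^{\pi}}{\partial\mathbf{K}_i}\right|\,\right|$ (absolute value of the determinant of the Jacobian of $\mathbf{K}^\pi$ with respect to the factor $\mathbf{K}_i$, others held fixed). Then $\mathrm{BS}_i^{\pi}$ does not depend on $\pi$; that is, the block sensitivity of a factor is determined by the matrices alone and not by the position of $\mathbf{K}_i$ in the product.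
   Context: For $\mathbf{A}=(a_{i,j})\in\mathbb{R}^{p,q}$, $\operatorname{vec}(\mathbf{A})$ is the row-major vectorization $(a_{1,1},\dots,a_{1,q},\dots,a_{p,1},\dots,a_{p,q})^{\mathrm T}$. The Jacobian $\frac{\partial\mathbf{K}^{\pi}}{\partial\mathbf{K}_i}$ is the $n^2\times n^2$ Jacobian matrix of the map $\operatorname{vec}(\mathbf{X})\mapsto\operatorname{vec}(\mathbf{P}\mathbf{X}\mathbf{Q})$, where $\mathbf{P}$ is the product of the factors to the left of $\mathbf{K}_i$ in $\mathbf{K}^\pi$ and $\mathbf{Q}$ the product of the factors to its right (empty products are the identity). $|\cdot|$ denotes the determinant and the outer bars the absolute value. *)

(* Defs.v *)
From HB Require Import structures.
From mathcomp Require Import all_boot all_order all_algebra all_fingroup.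
From mathcomp Require Import all_classical all_reals.
Set Implicit Arguments. Unset Strict Implicit. Unset Printing Implicit Defensive.
Import Order.TTheory GRing.Theory Num.Theory.
Local Open Scope ring_scope.

(* Factors are indexed by 'I_m (0-based); the product is
   K^pi = K (pi (m-1)) *m ... *m K (pi 0).
   K_i sits at position j0 = (pi^-1)%g i. *)

Definition left_prod (R : realType) (n m : nat) (K : 'I_m -> 'M[R]_n)
  (pi : 'S_m) (i : 'I_m) : 'M[R]_n :=
  \big[mulmx/1%:M]_(j <- rev (enum 'I_m) | ((pi^-1)%g i < j)%N) K (pi j).

Definition right_prod (R : realType) (n m : nat) (K : 'I_m -> 'M[R]_n)
  (pi : 'S_m) (i : 'I_m) : 'M[R]_n :=
  \big[mulmx/1%:M]_(j <- rev (enum 'I_m) | (j < (pi^-1)%g i)%N) K (pi j).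

(* Jacobian (n^2 x n^2, acting on column vectors) of the linear map
   vec(X) |-> vec(P X Q), with row-major vec = mathcomp's mxvec.
   lin_mx f satisfies mxvec (f X) = mxvec X *m lin_mx f (row vectors),
   so the column-convention Jacobian is its transpose. *)
Definition jacobian (R : realType) (n m : nat) (K : 'I_m -> 'M[R]_n)
  (pi : 'S_m) (i : 'I_m) : 'M[R]_(n * n) :=
  (lin_mx (fun X : 'M[R]_n => left_prod K pi i *m X *m right_prod K pi i))^T.

Definition block_sensitivity (R : realType) (n m : nat) (K : 'I_m -> 'M[R]_n)
  (pi : 'S_m) (i : 'I_m) : R :=
  `| \det (jacobian K pi i) |.

(* Main.v *)
Require Import Defs.
From HB Require Import structures.
From mathcomp Require Import all_boot all_order all_algebra all_fingroup.
From mathcomp Require Import all_classical all_reals.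
Set Implicit Arguments. Unset Strict Implicit. Unset Printing Implicit Defensive.
Import Order.TTheory GRing.Theory Num.Theory.
Local Open Scope ring_scope.
Lemma index_allpairs (T1 T2 : eqType) (s1 : seq T1) (s2 : seq T2) x y :
  x \in s1 -> y \in s2 ->
  index (x, y) [seq (a, b) | a <- s1, b <- s2] = (index x s1 * size s2 + index y s2)%N.
Proof.
elim: s1 => [|a s1 IH] //= xin yin.
rewrite index_cat.
have [->|nxa] := eqVneq x a.
  have inj : injective (pair a : T2 -> T1 * T2) by move=> u v [].
  by rewrite (mem_map inj) yin (index_map inj).
case: ifP => [/mapP [b _ [E _]]|_]; first by rewrite E eqxx in nxa.
rewrite size_map IH; last by [].
  by rewrite mulSn addnA.
by move: xin; rewrite inE (negbTE nxa).
Qed.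


Lemma mxvec_index_val m n (i : 'I_m) (j : 'I_n) :
  nat_of_ord (mxvec_index i j) = (i * n + j)%N.
Proof.
rewrite /mxvec_index /=.
have H : forall (T : finType) (x : T), val (enum_rank x) = index x (enum T).
  move=> T x; apply/eqP; rewrite -(nth_uniq x (s:=enum T)) ?enum_uniq ?nth_enum_rank ?nth_index ?mem_enum //.
  - by rewrite -cardE ltn_ord.
  - by rewrite index_mem mem_enum.
rewrite H enumT unlock /= /prod_enum index_allpairs ?mem_enum //.
by rewrite !index_enum_ord size_enum_ord.
Qed.

Lemma det_blockdiag (R : comNzRingType) n (hn : (0 < n)%N) (Q : 'M[R]_n) m (A : 'M[R]_(m * n)) :
  (forall a b : 'I_(m * n), A a b = if (a %/ n == b %/ n)%N
     then Q (Ordinal (ltn_pmod a hn)) (Ordinal (ltn_pmod b hn)) else 0) ->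
  \det A = \det Q ^+ m.
Proof.
elim: m A => [|m IH] A HA; first by rewrite det_mx00 expr0.
have E : forall a : 'I_(m * n), ((n + a) %/ n = (a %/ n).+1)%N.
  by move=> a; rewrite -{1}(mul1n n) divnMDl.
have Em : forall a : 'I_(m * n), ((n + a) %% n = a %% n)%N.
  by move=> a; rewrite -{1}(mul1n n) modnMDl.
rewrite -[A : 'M_(n + m * n)]submxK.
have -> : dlsubmx (A : 'M_(n + m * n)) = 0.
  apply/matrixP => a b; rewrite !mxE HA /=.
  by rewrite E (divn_small (ltn_ord b)).
rewrite det_ublock exprS; congr (_ * _).
  congr (\det _); apply/matrixP => a b; rewrite !mxE HA /=.
  rewrite !divn_small ?ltn_ord //=; congr (Q _ _); apply: val_inj; by rewrite /= modn_small.
apply: IH => a b; rewrite !mxE HA /= !E eqSS.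
by case: eqP => // _; congr (Q _ _); apply: val_inj; rewrite /= Em.
Qed.

Lemma ord_mod_eq n (hn : (0 < n)%N) N (a : 'I_N) (k : 'I_n) :
  (a %% n = k)%N -> Ordinal (ltn_pmod a hn) = k.
Proof. by move=> h; apply: val_inj. Qed.

Section Lin.
Variable R : comNzRingType.

Lemma row_lin_mx m1 n1 m2 n2 (h : 'M[R]_(m1, n1) -> 'M[R]_(m2, n2)) a :
  row a (lin_mx h) = mxvec (h (vec_mx (delta_mx 0 a))).
Proof. by apply/rowP => j; rewrite !mxE. Qed.

Lemma lin_mx_comp m1 n1 m2 n2 m3 n3 (g : 'M[R]_(m1, n1) -> 'M[R]_(m2, n2))
  (f : {linear 'M[R]_(m2, n2) -> 'M[R]_(m3, n3)}) :
  lin_mx g *m lin_mx f = lin_mx (f \o g).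
Proof.
by apply/row_matrixP => a; rewrite row_mul !row_lin_mx mul_vec_lin.
Qed.

Lemma eq_lin_mx m1 n1 m2 n2 (f g : 'M[R]_(m1, n1) -> 'M[R]_(m2, n2)) :
  f =1 g -> lin_mx f = lin_mx g.
Proof. by move=> E; apply/matrixP => a b; rewrite !mxE /= E. Qed.

Lemma lin_mx_id m1 n1 (f : 'M[R]_(m1, n1) -> 'M[R]_(m1, n1)) :
  f =1 id -> lin_mx f = 1%:M.
Proof.
move=> E; apply/row_matrixP => a; rewrite row_lin_mx E vec_mxK.
by rewrite rowE mulmx1.
Qed.

Lemma det_lin_mulmxr m n (hn : (0 < n)%N) (Q : 'M[R]_n) :
  \det (lin_mx (mulmxr Q : 'M[R]_(m, n) -> 'M[R]_(m, n))) = \det Q ^+ m.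
Proof.
apply: (@det_blockdiag R n hn Q m) => a b.
case/mxvec_indexP: a => i k; case/mxvec_indexP: b => i' j.
have -> : Ordinal (ltn_pmod (mxvec_index i k) hn) = k.
  apply: ord_mod_eq.
  by rewrite mxvec_index_val modnMDl modn_small.
have -> : Ordinal (ltn_pmod (mxvec_index i' j) hn) = j.
  apply: ord_mod_eq.
  by rewrite mxvec_index_val modnMDl modn_small.
have -> : (mxvec_index i k %/ n == mxvec_index i' j %/ n)%N = (i == i').
  by rewrite !mxvec_index_val !divnMDl // !divn_small // !addn0.
rewrite !mxE /= vec_mx_delta mxvecE.
rewrite mxE (bigD1 k) //= big1 ?addr0; last first.
  by move=> l /negbTE nl; rewrite mxE nl andbF mul0r.
rewrite mxE eqxx andbT eq_sym.
by case: eqP => _; rewrite ?mul1r ?mul0r.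
Qed.

Lemma det_lin_mulmx n (hn : (0 < n)%N) (P : 'M[R]_n) :
  \det (lin_mx (mulmx P : 'M[R]_(n, n) -> 'M[R]_(n, n))) = \det P ^+ n.
Proof.
set T := lin_mx (@trmx R n n).
have HT : T *m T = 1%:M.
  rewrite lin_mx_comp; apply: lin_mx_id => X. exact: (trmxK X).
have -> : lin_mx (mulmx P) = T *m lin_mx (mulmxr P^T) *m T.
  rewrite lin_mx_comp lin_mx_comp; apply: eq_lin_mx => X.
  change (P *m X = (X^T *m P^T)^T).
  by rewrite trmx_mul !trmxK.
rewrite !det_mulmx det_lin_mulmxr // det_tr mulrC mulrA -det_mulmx HT det1 mul1r.
done.
Qed.

Lemma det_lin_LXR n (hn : (0 < n)%N) (L Rm : 'M[R]_n) :
  \det (lin_mx (fun X : 'M[R]_n => L *m X *m Rm)) = (\det L * \det Rm) ^+ n.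
Proof.
have -> : lin_mx (fun X : 'M[R]_n => L *m X *m Rm) = lin_mx (mulmxr Rm \o mulmx L).
  by apply: eq_lin_mx.
by rewrite -lin_mx_comp det_mulmx det_lin_mulmx // det_lin_mulmxr // exprMn.
Qed.

End Lin.

Lemma det_bigmul (R : comNzRingType) n (I : Type) (s : seq I) (P : pred I)
  (F : I -> 'M[R]_n) :
  \det (\big[mulmx/1%:M]_(j <- s | P j) F j) = \prod_(j <- s | P j) \det (F j).
Proof. by apply: big_morph; [exact: det_mulmx | exact: det1]. Qed.

Lemma bs_formula (R : realType) (n m : nat) (hn : (1 <= n)%N)
  (K : 'I_m -> 'M[R]_n) (i : 'I_m) (tau : 'S_m) :
  block_sensitivity K tau i = `| \prod_(k | k != i) \det (K k) | ^+ n.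
Proof.
rewrite /block_sensitivity /jacobian det_tr det_lin_LXR // normrX.
congr (`| _ | ^+ n).
rewrite /left_prod /right_prod !det_bigmul !big_rev !big_enum_cond /=.
set j0 := (tau^-1)%g i.
rewrite [RHS](reindex_inj (@perm_inj _ tau)) /=.
have -> : \prod_(j < m | tau j != i) \det (K (tau j))
        = \prod_(j < m | j != j0) \det (K (tau j)).
  apply: eq_bigl => j.
  by rewrite /j0 -[in RHS](inj_eq (@perm_inj _ tau)) permKV.
rewrite (bigID (fun j : 'I_m => (j0 < j)%N) (fun j => j != j0)) /=.
congr (_ * _); apply: eq_bigl => j; rewrite -val_eqE /=.
  by case: ltngtP.
by case: ltngtP.
Qed.

Theorem theorem6 (R : realType) (n m : nat) (hn : (1 <= n)%N) (hm : (1 <= m)%N)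
  (K : 'I_m -> 'M[R]_n) (i : 'I_m) (pi sigma : 'S_m) :
  block_sensitivity K pi i = block_sensitivity K sigma i.
Proof. by rewrite !bs_formula. Qed.
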